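(* Let $p$ be a prime, $S$ a ring of characteristic $p$, and $S[y]$ the polynomial ring in one variable over $S$. For every $f\in S[y]$, writing $f'$ for its formal derivative, $(f')^pS[y]\subset S[y^p,f]$. *)

(* Defs.v *)
From HB Require Import structures.
From mathcomp Require Import all_boot all_order all_algebra.
Set Implicit Arguments. Unset Strict Implicit. Unset Printing Implicit Defensive.
Import GRing.Theory.
Local Open Scope ring_scope.

(* The S-subalgebra S[y^p, f] of S[y]: all Q(y^p, f) for a bivariate
   polynomial Q with coefficients in S.  Q is a polynomial in the second
   variable (substituted by f) whose coefficients are polynomials in the
   first variable (substituted by y^p, i.e. composed with 'X^p). *)
Definition in_Sypf (S : comNzRingType) (p : nat) (f h : {poly S}) : Prop :=
  exists Q : {poly {poly S}},
    h = (map_poly (fun c : {poly S} => c \Po 'X^p) Q).[f].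

(* Main.v *)
Require Import Defs.
From HB Require Import structures.
From mathcomp Require Import all_boot all_order all_algebra zify.
Import GRing.Theory.
Local Open Scope ring_scope.

Lemma inR_E {S : comNzRingType} p (f h : {poly S}) :
  in_Sypf p f h <-> exists Q : {poly {poly S}}, h = (map_poly (comp_poly 'X^p) Q).[f].
Proof. by []. Qed.

Lemma inR_add {S : comNzRingType} p (f a b : {poly S}) :
  in_Sypf p f a -> in_Sypf p f b -> in_Sypf p f (a + b).
Proof.
move=> /inR_E [Q1 ->] /inR_E [Q2 ->]; apply/inR_E; exists (Q1 + Q2).
by rewrite raddfD hornerD.
Qed.

Lemma inR_mul {S : comNzRingType} p (f a b : {poly S}) :
  in_Sypf p f a -> in_Sypf p f b -> in_Sypf p f (a * b).
Proof.
move=> /inR_E [Q1 ->] /inR_E [Q2 ->]; apply/inR_E; exists (Q1 * Q2).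
by rewrite rmorphM hornerM.
Qed.

Lemma inR_opp {S : comNzRingType} p (f a : {poly S}) :
  in_Sypf p f a -> in_Sypf p f (- a).
Proof.
move=> /inR_E [Q1 ->]; apply/inR_E; exists (- Q1).
by rewrite raddfN hornerN.
Qed.

Lemma inR_A {S : comNzRingType} p (f c : {poly S}) :
  in_Sypf p f (c \Po 'X^p).
Proof. by apply/inR_E; exists c%:P; rewrite map_polyC hornerC. Qed.

Lemma inR_f {S : comNzRingType} p (f : {poly S}) : in_Sypf p f f.
Proof. by apply/inR_E; exists 'X; rewrite map_polyX hornerX. Qed.

Lemma inR_0 {S : comNzRingType} p (f : {poly S}) : in_Sypf p f 0.
Proof. by have := inR_A p f 0; rewrite comp_poly0. Qed.

Lemma inR_C {S : comNzRingType} p (f : {poly S}) c : in_Sypf p f c%:P.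
Proof. by have := inR_A p f c%:P; rewrite comp_polyC. Qed.

Lemma inR_natmul {S : comNzRingType} p (f a : {poly S}) n :
  in_Sypf p f a -> in_Sypf p f (a *+ n).
Proof. move=> Ha; elim: n => [|n IH]; [rewrite mulr0n; exact: inR_0 | rewrite mulrS; exact: inR_add]. Qed.

Lemma inR_exp {S : comNzRingType} p (f a : {poly S}) n :
  in_Sypf p f a -> in_Sypf p f (a ^+ n).
Proof.
move=> Ha; elim: n => [|n IH]; first by rewrite expr0 -polyC1; exact: inR_C.
by rewrite exprS; exact: inR_mul.
Qed.

Lemma inR_sum {S : comNzRingType} p (f : {poly S}) n (F : 'I_n -> {poly S}) :
  (forall i, in_Sypf p f (F i)) -> in_Sypf p f (\sum_(i < n) F i).
Proof.
move=> H; apply: (big_ind (in_Sypf p f)) => //; [exact: inR_0 | exact: inR_add].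
Qed.
Definition ell {S : comNzRingType} (p r n : nat) : {poly S} :=
  if (n %% p == r)%N then 'X^(n %/ p) \Po 'X^p else 0.

Definition psi {S : comNzRingType} (p r : nat) (Q : {poly {poly S}}) : {poly S} :=
  \sum_(n < size Q) Q`_n * ell p r n.

Lemma psiE {S : comNzRingType} p r (Q : {poly {poly S}}) N :
  (size Q <= N)%N -> psi p r Q = \sum_(n < N) Q`_n * ell p r n.
Proof.
move=> H; rewrite /psi -(subnKC H) big_split_ord /=.
rewrite [X in _ = _ + X]big1 ?addr0 // => j _.
by rewrite nth_default ?mul0r // leq_addr.
Qed.

Lemma psiD {S : comNzRingType} p r (Q1 Q2 : {poly {poly S}}) :
  psi p r (Q1 + Q2) = psi p r Q1 + psi p r Q2.
Proof.
set N := maxn (size (Q1 + Q2)) (maxn (size Q1) (size Q2)).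
rewrite (@psiE _ _ _ _ N) ?leq_maxl // (@psiE _ _ _ Q1 N); last first.
  by rewrite /N (leq_trans _ (leq_maxr _ _)) ?leq_maxl.
rewrite (@psiE _ _ _ Q2 N); last first.
  by rewrite /N (leq_trans _ (leq_maxr _ _)) ?leq_maxr.
by rewrite -big_split /=; apply: eq_bigr => n _; rewrite coefD mulrDl.
Qed.

Lemma psi0 {S : comNzRingType} p r : psi p r (0 : {poly {poly S}}) = 0.
Proof. by rewrite /psi size_poly0 big_ord0. Qed.

Lemma psiCM {S : comNzRingType} p r c (Q : {poly {poly S}}) :
  psi p r (c%:P * Q) = c * psi p r Q.
Proof.
set N := maxn (size (c%:P * Q)) (size Q).
rewrite (@psiE _ _ _ _ N) ?leq_maxl // (@psiE _ _ _ Q N) ?leq_maxr //.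
by rewrite mulr_sumr; apply: eq_bigr => n _; rewrite coefCM mulrA.
Qed.

Lemma psiN {S : comNzRingType} p r (Q : {poly {poly S}}) :
  psi p r (- Q) = - psi p r Q.
Proof. by rewrite -mulN1r -polyCN psiCM mulN1r. Qed.

Lemma psiMn {S : comNzRingType} p r (Q : {poly {poly S}}) n :
  psi p r (Q *+ n) = psi p r Q *+ n.
Proof. by elim: n => [|n IH]; rewrite ?mulr0n ?psi0 // !mulrS psiD IH. Qed.

Lemma psi_sum {S : comNzRingType} p r n (F : 'I_n -> {poly {poly S}}) :
  psi p r (\sum_(i < n) F i) = \sum_(i < n) psi p r (F i).
Proof. exact: (big_morph _ (@psiD S p r) (psi0 p r)). Qed.

Lemma ell_shift {S : comNzRingType} p r n : (0 < p)%N ->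
  ell p r (p + n)%N = ('X^p : {poly S}) * ell p r n.
Proof.
move=> p0; rewrite /ell modnDl.
case: ifP => _; last by rewrite mulr0.
rewrite divnDl ?dvdnn // divnn p0 add1n exprS comp_polyM comp_polyX //.
Qed.

Lemma psiXp {S : comNzRingType} p r (Q : {poly {poly S}}) : (0 < p)%N ->
  psi p r ('X^p * Q) = 'X^p * psi p r Q.
Proof.
move=> p0.
have Hs : (size ('X^p * Q)%R <= p + size Q)%N.
  apply: (leq_trans (size_polyMleq _ _)); rewrite size_polyXn addSn //.
rewrite (@psiE _ p r _ _ Hs) big_split_ord /= big1 ?add0r; last first.
  by move=> j _; rewrite coefXnM ltn_ord mul0r.
rewrite /psi mulr_sumr; apply: eq_bigr => j _.
rewrite coefXnM ltnNge leq_addr /= addKn ell_shift //.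
by rewrite mulrCA.
Qed.

Lemma psiXn {S : comNzRingType} p r m :
  psi p r ('X^m : {poly {poly S}}) = ell p r m.
Proof.
rewrite (@psiE _ _ _ _ m.+1) ?size_polyXn // big_ord_recr /= big1 ?add0r.
  by rewrite coefXn eqxx mul1r.
by move=> j _; rewrite coefXn (ltn_eqF (ltn_ord j)) mul0r.
Qed.

Lemma binom_neg (R : nzRingType) p : p \in [pchar R] ->
  forall i, (i < p)%N -> ((-1) ^+ i *+ 'C(p.-1, i) = 1 :> R).
Proof.
move=> ch; have pr := pcharf_prime ch; have p0 := prime_gt0 pr.
elim=> [|i IH] Hi; first by rewrite bin0 expr0.
have H0 : ('C(p, i.+1))%:R = 0 :> R.
  by apply/eqP; rewrite -(dvdn_pcharf ch) prime_dvd_bin.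
move: H0; rewrite -{1}(prednK p0) binS natrD => /eqP; rewrite addr_eq0 => /eqP H1.
rewrite -mulr_natr H1 exprS mulrN mulN1r mulNr opprK mulr_natr IH //.
by apply: ltnW.
Qed.

Lemma core {S : comNzRingType} p (pr : prime p) (ch : p \in [pchar S])
  (f : {poly S}) i : (i < p)%N -> in_Sypf p f (f^`() ^+ p.-1 * 'X^i).
Proof.
move=> ip; have p0 := prime_gt0 pr.
set r := (p.-1 - i)%N.
pose a : {poly {poly S}} := map_poly polyC f.
pose b : {poly {poly S}} := f%:P.
pose e : {poly {poly S}} := 'X - ('X : {poly S})%:P.
have [q Hq] : exists q, a - b = q * e.
  apply/factor_theorem; rewrite /root hornerD hornerN hornerC.
  by rewrite (_ : a.['X] = f \Po 'X) // comp_polyXr subrr.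
have Hq1 : q.['X] = f^`().
  have := congr1 (fun P => (P^`()).['X]) Hq => /=.
  rewrite derivB derivC subr0 deriv_map derivM derivXsubC mulr1 hornerD hornerM.
  by rewrite hornerXsubC subrr mulr0 add0r => <-; rewrite -[RHS]comp_polyXr.
have [K HK] : exists K, q ^+ p.-1 - (f^`() ^+ p.-1)%:P = K * e.
  apply/factor_theorem; rewrite /root hornerD hornerN horner_exp Hq1 hornerC.
  by rewrite subrr.
have chP : p \in [pchar {poly {poly S}}] by rewrite !pchar_poly.
have He : e ^+ p = 'X^p - ('X^p)%:P.
  rewrite /e -(pFrobenius_autE chP) pFrobenius_autB_comm; last exact: mulrC.
  by rewrite !pFrobenius_autE -rmorphXn.
have Hpsie : psi p r (e ^+ p.-1) = 'X^i.
  rewrite /e exprDn psi_sum (bigD1 (Ordinal (leq_trans ip (leqSpred p)))) //=.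
  rewrite big1 ?addr0.
    rewrite psiMn -polyCN -rmorphXn mulrC psiCM psiXn /ell.
    rewrite modn_small ?divn_small ?eqxx; try lia.
    by rewrite expr0 comp_polyC mulr1 exprNn -mulrnAl binom_neg ?mul1r ?pchar_poly.
  move=> k; rewrite -val_eqE /= => /eqP Hk.
  rewrite psiMn -polyCN -rmorphXn mulrC psiCM psiXn /ell.
  rewrite modn_small; last by have := ltn_ord k; lia.
  case: eqP => [H|_]; last by rewrite mulr0 mul0rn.
  by have := ltn_ord k; lia.
have Hmain : psi p r ((a - b) ^+ p.-1) = f^`() ^+ p.-1 * 'X^i.
  rewrite Hq exprMn (_ : q ^+ p.-1 = K * e + (f^`() ^+ p.-1)%:P); last first.
    by rewrite -HK subrK.
  rewrite mulrDl psiD (psiCM p r (f^`() ^+ p.-1)) Hpsie -mulrA -exprS prednK // He mulrBr psiD psiN.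
  rewrite [(K * _)%R]mulrC [(K * _)%R]mulrC (@psiXp _ p r K p0) (psiCM p r).
  by rewrite subrr add0r.
rewrite -Hmain exprDn psi_sum; apply: inR_sum => k.
rewrite psiMn; apply: inR_natmul.
rewrite /b -polyCN -rmorphXn /a -rmorphXn mulrC psiCM.
apply: inR_mul; first by apply: inR_exp; apply: inR_opp; apply: inR_f.
rewrite /psi; apply: inR_sum => n; apply: inR_mul; first by rewrite coef_map; exact: inR_C.
rewrite /ell; case: ifP => _; [exact: inR_A | exact: inR_0].
Qed.

Lemma allXn {S : comNzRingType} p (pr : prime p) (ch : p \in [pchar S])
  (f : {poly S}) n : in_Sypf p f (f^`() ^+ p.-1 * 'X^n).
Proof.
have p0 := prime_gt0 pr.
have -> : n = (n %/ p * p + n %% p)%N by rewrite -divn_eq.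
rewrite exprD mulrCA.
apply: inR_mul; last by apply: core => //; apply: ltn_pmod.
have -> : ('X^(n %/ p * p) : {poly S}) = 'X^(n %/ p) \Po 'X^p.
  by rewrite rmorphXn /= comp_polyX -exprM mulnC.
exact: inR_A.
Qed.

Lemma allh {S : comNzRingType} p (pr : prime p) (ch : p \in [pchar S])
  (f h : {poly S}) : in_Sypf p f (f^`() ^+ p.-1 * h).
Proof.
rewrite -[h]coefK poly_def mulr_sumr; apply: inR_sum => i.
rewrite -scalerAr -mul_polyC; apply: inR_mul; first exact: inR_C.
exact: allXn.
Qed.

Theorem theorem6p10 (p : nat) (S : comNzRingType) (pr_p : prime p)
  (charS : p \in [pchar S]) (f g : {poly S}) :
  in_Sypf p f ((f^`()) ^+ p * g).
Proof.
have -> : f^`() ^+ p = f^`() ^+ p.-1 * f^`() by rewrite -exprSr prednK // prime_gt0.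
rewrite -mulrA; exact: allh.
Qed.
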